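(* Let $k$ be a positive integer and $n=96k$. Let $V_n=M_0\cup M_1\cup M_3\cup M_5$, where \[ M_0=\{6a:0\le a\le 18k\},\quad M_1=\{6a+1:12k\le a\le 24k-1\}, \] \[ M_3=\{6a+3:0\le a\le 54k-2\},\quad M_5=\{6a-1:12k\le a\le 24k-1\}. \] Then $V_n$ has $n$ points, and if $\mathcal P$ is the pattern of $\{0,1,3\}$ under direct similarity, then $S_{\mathcal P}(V_n)=(3n^2-8n)/16$. In particular $\lim_{n\to\infty,\,96\mid n}S_{\mathcal P}(V_n)/n^2=3/16$.
   Context: A direct similarity of $\mathbb R$ is a map $x\mapsto ax+b$ with $a>0$, $b\in\mathbb R$. $\mathcal P$ is the set of all images of $\{0,1,3\}$ under direct similarities, i.e. all sets $\{x,x+d,x+3d\}$ with $d>0$. $S_{\mathcal P}(V)$ is the number of $P\in\mathcal P$ with $P\subseteq V$. *)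

(* Defs.v *)
From HB Require Import structures.
From mathcomp Require Import all_boot all_order all_algebra.
From Stdlib Require Import ClassicalDescription.
Set Implicit Arguments. Unset Strict Implicit. Unset Printing Implicit Defensive.
Import Order.TTheory GRing.Theory Num.Theory.
Local Open Scope ring_scope.

Definition asbool (P : Prop) : bool :=
  if excluded_middle_informative P then true else false.

Section Pattern.
Variable R : realFieldType.

(* P (a subset of the finite set V) is an image of {0,1,3} under a direct
   similarity x |-> a x + b (a > 0), i.e. P = {x, x+d, x+3d} with d > 0. *)
Definition in_pattern (V : seq R) (P : {set seq_sub V}) : Prop :=
  exists x d : R, 0 < d /\ x \in V /\ x + d \in V /\ x + 3 * d \in V /\
    forall z : seq_sub V, z \in P <-> (val z = x \/ val z = x + d \/ val z = x + 3 * d).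

Definition S_P (V : seq R) : nat :=
  #|[set P : {set seq_sub V} | asbool (in_pattern P)]|.

Definition M0 (k : nat) : seq R := [seq (6 * a)%N%:R | a <- seq.iota 0 (18 * k + 1)%N].
Definition M1 (k : nat) : seq R := [seq (6 * a + 1)%N%:R | a <- seq.iota (12 * k)%N (12 * k)%N].
Definition M3 (k : nat) : seq R := [seq (6 * a + 3)%N%:R | a <- seq.iota 0 (54 * k - 1)%N].
Definition M5 (k : nat) : seq R := [seq (6 * a)%N%:R - 1 | a <- seq.iota (12 * k)%N (12 * k)%N].
Definition Vn (k : nat) : seq R := M0 k ++ M1 k ++ M3 k ++ M5 k.
End Pattern.

(* Main.v *)
Require Import Defs.
From HB Require Import structures.
From mathcomp Require Import all_boot all_order all_algebra.
From mathcomp Require Import zify ring lra.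
From Stdlib Require Import ClassicalDescription.
Import Order.TTheory GRing.Theory Num.Theory.
Local Open Scope ring_scope.
Definition memr (k c q : nat) : bool :=
  match c with
  | 0 => (q <= 18 * k)%N
  | 1 => (12 * k <= q < 24 * k)%N
  | 3 => (q < 54 * k - 1)%N
  | 5 => (12 * k <= q.+1 < 24 * k)%N
  | _ => false end.
Definition memW (k y : nat) : bool := memr k (y %% 6) (y %/ 6).
Definition cnd k x d : bool := [&& (0 < d)%N, memW k x, memW k (x + d)%N & memW k (x + 3 * d)%N].

Lemma memW6 k q c : (c < 6)%N -> memW k (6 * q + c)%N = memr k c q.
Proof. by move=> hc; rewrite /memW (mulnC 6 q) modnMDl divnMDl // modn_small // divn_small // addn0. Qed.

Lemma count_int (b : bool) L H n :
  (\sum_(0 <= a < n) (b && (L <= a) && (a < H)) = b * (minn n H - L))%N.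
Proof.
elim: n => [|n IH]; first by rewrite big_geq //; lia.
rewrite big_nat_recr //= IH.
move: IH => _; case: b => /=; case: (leqP L n) => h1; case: (ltnP n H) => h2 /=; lia.
Qed.

Lemma tele_step (f : nat -> nat) (m p n : nat) (mz pz A Bc : int) :
  m%:Z = mz -> p%:Z = pz -> (m <= p <= n)%N ->
  (forall e, (m <= e < p)%N -> (f e)%:Z = A * e%:Z + Bc) ->
  (2 * \sum_(m <= e < n) f e)%N%:Z =
    A * (pz * (pz - 1) - mz * (mz - 1)) + 2 * Bc * (pz - mz) + (2 * \sum_(p <= e < n) f e)%N%:Z.
Proof.
move=> <- <- /andP[hmp hpn] hf.
rewrite (big_cat_nat hmp hpn) /= mulnDr PoszD; congr (_ + _).
elim: p hmp hpn hf => [|p IH] hmp hpn hf.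
  by move: hmp; rewrite leqn0 => /eqP ->; rewrite big_geq //; ring.
case: (leqP m p) => hm.
  rewrite big_nat_recr //= mulnDr PoszD IH //; last first.
    by move=> e /andP[h1 h2]; apply: hf; rewrite h1 ltnW.
    by apply: ltnW.
  rewrite PoszM hf; last by rewrite hm leqnn.
  rewrite -addn1 PoszD. ring.
have -> : m = p.+1 by lia.
rewrite big_geq //; ring.
Qed.

Lemma count6 (b : bool) L0 L1 L2 H0 H1 H2 n :
  (\sum_(0 <= a < n) (b && [&& L0 <= a, L1 <= a, L2 <= a, a < H0, a < H1 & a < H2]))%N
  = (b * (minn n (minn (minn H0 H1) H2) - maxn (maxn L0 L1) L2))%N.
Proof.
rewrite -count_int; apply: eq_bigr => a _; congr (nat_of_bool _).
by rewrite !geq_max !leq_min !andbA.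
Qed.

Lemma minn4 (x0 x1 x2 x3 v : nat) :
  [&& v <= x0, v <= x1, v <= x2 & v <= x3]%N -> v \in [:: x0; x1; x2; x3] ->
  minn x0 (minn (minn x1 x2) x3) = v.
Proof. rewrite !inE => /and4P[h0 h1 h2 h3] /or4P[] /eqP E; lia. Qed.

Lemma maxn3 (x0 x1 x2 v : nat) :
  [&& x0 <= v, x1 <= v & x2 <= v]%N -> v \in [:: x0; x1; x2] ->
  maxn (maxn x0 x1) x2 = v.
Proof. rewrite !inE => /and3P[h0 h1 h2] /or3P[] /eqP E; lia. Qed.

Ltac piece h l :=
  rewrite (@minn4 _ _ _ _ h); [rewrite (@maxn3 _ _ _ l); [lia| lia | by rewrite !inE eqxx ?orbT] | lia | by rewrite !inE eqxx ?orbT].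

Lemma case_0_0 k : (0 < k)%N -> (2*(\sum_(0 <= e < 54*k+1) \sum_(0 <= a < 54*k+1) cnd k (6*a+0) (6*e+0))%N)%N%:Z = (0) * k%:Z ^+ 0 + (-6) * k%:Z ^+ 1 + (108) * k%:Z ^+ 2.
Proof.
move=> kp.
have E : forall e, (0 <= e < 54*k+1)%N -> (\sum_(0 <= a < 54*k+1) cnd k (6*a+0) (6*e+0))%N = ((0 < e)%N * (minn (54*k+1) (minn (minn (18*k + 1) (18*k + 1 - (e+0))) (18*k + 1 - (3*e+0))) - maxn (maxn (0) (0 - (e+0))) (0 - (3*e+0))))%N.
  move=> e he; rewrite -count6; apply: eq_big_nat => a ha; congr (nat_of_bool _).
  rewrite /cnd.
  have -> : (6*a+0 + (6*e+0) = 6*(a+e+0)+0)%N by lia.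
have -> : (6*a+0 + 3*(6*e+0) = 6*(a+3*e+0)+0)%N by lia.
  rewrite !memW6 //= ?leq_subLR ?ltn_subRL; apply/idP/idP; lia.
rewrite (eq_big_nat _ _ E).
rewrite (@tele_step _ (0)%N (1)%N _ (0 * k%:Z + (0)) (0 * k%:Z + (1)) (0) ((0) * k%:Z + (0))); [|lia|lia|lia|move=> e he /=; piece ((18*k + 1))%N ((0))%N].
rewrite (@tele_step _ (1)%N (6*k + 1)%N _ (0 * k%:Z + (1)) (6 * k%:Z + (1)) (-3) ((18) * k%:Z + (1))); [|lia|lia|lia|move=> e he /=; piece ((18*k + 1 - (3*e+0)))%N ((0))%N].
rewrite (@tele_step _ (6*k + 1)%N (54*k + 1)%N _ (6 * k%:Z + (1)) (54 * k%:Z + (1)) (0) ((0) * k%:Z + (0))); [|lia|lia|lia|move=> e he /=; piece ((18*k + 1 - (3*e+0)))%N ((0))%N].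
rewrite big_geq // muln0 addr0.
ring.
Qed.

Lemma case_0_1 k : (0 < k)%N -> (2*(\sum_(0 <= e < 54*k+1) \sum_(0 <= a < 54*k+1) cnd k (6*a+0) (6*e+1))%N)%N%:Z = (0) * k%:Z ^+ 0 + (12) * k%:Z ^+ 1 + (342) * k%:Z ^+ 2.
Proof.
move=> kp.
have E : forall e, (0 <= e < 54*k+1)%N -> (\sum_(0 <= a < 54*k+1) cnd k (6*a+0) (6*e+1))%N = (true * (minn (54*k+1) (minn (minn (18*k + 1) (24*k - (e+0))) (54*k - 1 - (3*e+0))) - maxn (maxn (0) (12*k - (e+0))) (0 - (3*e+0))))%N.
  move=> e he; rewrite -count6; apply: eq_big_nat => a ha; congr (nat_of_bool _).
  rewrite /cnd.
  have -> : (6*a+0 + (6*e+1) = 6*(a+e+0)+1)%N by lia.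
have -> : (6*a+0 + 3*(6*e+1) = 6*(a+3*e+0)+3)%N by lia.
  rewrite !memW6 //= ?leq_subLR ?ltn_subRL; apply/idP/idP; lia.
rewrite (eq_big_nat _ _ E).
rewrite (@tele_step _ (0)%N (6*k - 1)%N _ (0 * k%:Z + (0)) (6 * k%:Z + (-1)) (1) ((6) * k%:Z + (1))); [|lia|lia|lia|move=> e he /=; piece ((18*k + 1))%N ((12*k - (e+0)))%N].
rewrite (@tele_step _ (6*k - 1)%N (12*k)%N _ (6 * k%:Z + (-1)) (12 * k%:Z + (0)) (0) ((12) * k%:Z + (0))); [|lia|lia|lia|move=> e he /=; piece ((24*k - (e+0)))%N ((12*k - (e+0)))%N].
rewrite (@tele_step _ (12*k)%N (15*k)%N _ (12 * k%:Z + (0)) (15 * k%:Z + (0)) (-1) ((24) * k%:Z + (0))); [|lia|lia|lia|move=> e he /=; piece ((24*k - (e+0)))%N ((0))%N].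
rewrite (@tele_step _ (15*k)%N (18*k)%N _ (15 * k%:Z + (0)) (18 * k%:Z + (0)) (-3) ((54) * k%:Z + (-1))); [|lia|lia|lia|move=> e he /=; piece ((54*k - 1 - (3*e+0)))%N ((0))%N].
rewrite (@tele_step _ (18*k)%N (54*k + 1)%N _ (18 * k%:Z + (0)) (54 * k%:Z + (1)) (0) ((0) * k%:Z + (0))); [|lia|lia|lia|move=> e he /=; piece ((54*k - 1 - (3*e+0)))%N ((0))%N].
rewrite big_geq // muln0 addr0.
ring.
Qed.

Lemma case_0_2 k : (\sum_(0 <= e < 54*k+1) \sum_(0 <= a < 54*k+1) cnd k (6*a+0) (6*e+2))%N = 0%N.
Proof.
rewrite big1 // => e _; rewrite big1 // => a _.
rewrite /cnd.
have -> : (6*a+0 + (6*e+2) = 6*(a+e+0)+2)%N by lia.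
have -> : (6*a+0 + 3*(6*e+2) = 6*(a+3*e+1)+0)%N by lia.
by rewrite !memW6 //= ?andbF.
Qed.

Lemma case_0_3 k : (0 < k)%N -> (2*(\sum_(0 <= e < 54*k+1) \sum_(0 <= a < 54*k+1) cnd k (6*a+0) (6*e+3))%N)%N%:Z = (0) * k%:Z ^+ 0 + (18) * k%:Z ^+ 1 + (540) * k%:Z ^+ 2.
Proof.
move=> kp.
have E : forall e, (0 <= e < 54*k+1)%N -> (\sum_(0 <= a < 54*k+1) cnd k (6*a+0) (6*e+3))%N = (true * (minn (54*k+1) (minn (minn (18*k + 1) (54*k - 1 - (e+0))) (54*k - 1 - (3*e+1))) - maxn (maxn (0) (0 - (e+0))) (0 - (3*e+1))))%N.
  move=> e he; rewrite -count6; apply: eq_big_nat => a ha; congr (nat_of_bool _).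
  rewrite /cnd.
  have -> : (6*a+0 + (6*e+3) = 6*(a+e+0)+3)%N by lia.
have -> : (6*a+0 + 3*(6*e+3) = 6*(a+3*e+1)+3)%N by lia.
  rewrite !memW6 //= ?leq_subLR ?ltn_subRL; apply/idP/idP; lia.
rewrite (eq_big_nat _ _ E).
rewrite (@tele_step _ (0)%N (12*k - 1)%N _ (0 * k%:Z + (0)) (12 * k%:Z + (-1)) (0) ((18) * k%:Z + (1))); [|lia|lia|lia|move=> e he /=; piece ((18*k + 1))%N ((0))%N].
rewrite (@tele_step _ (12*k - 1)%N (18*k)%N _ (12 * k%:Z + (-1)) (18 * k%:Z + (0)) (-3) ((54) * k%:Z + (-2))); [|lia|lia|lia|move=> e he /=; piece ((54*k - 1 - (3*e+1)))%N ((0))%N].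
rewrite (@tele_step _ (18*k)%N (54*k + 1)%N _ (18 * k%:Z + (0)) (54 * k%:Z + (1)) (0) ((0) * k%:Z + (0))); [|lia|lia|lia|move=> e he /=; piece ((54*k - 1 - (3*e+1)))%N ((0))%N].
rewrite big_geq // muln0 addr0.
ring.
Qed.

Lemma case_0_4 k : (\sum_(0 <= e < 54*k+1) \sum_(0 <= a < 54*k+1) cnd k (6*a+0) (6*e+4))%N = 0%N.
Proof.
rewrite big1 // => e _; rewrite big1 // => a _.
rewrite /cnd.
have -> : (6*a+0 + (6*e+4) = 6*(a+e+0)+4)%N by lia.
have -> : (6*a+0 + 3*(6*e+4) = 6*(a+3*e+2)+0)%N by lia.
by rewrite !memW6 //= ?andbF.
Qed.

Lemma case_0_5 k : (0 < k)%N -> (2*(\sum_(0 <= e < 54*k+1) \sum_(0 <= a < 54*k+1) cnd k (6*a+0) (6*e+5))%N)%N%:Z = (-2) * k%:Z ^+ 0 + (6) * k%:Z ^+ 1 + (342) * k%:Z ^+ 2.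
Proof.
move=> kp.
have E : forall e, (0 <= e < 54*k+1)%N -> (\sum_(0 <= a < 54*k+1) cnd k (6*a+0) (6*e+5))%N = (true * (minn (54*k+1) (minn (minn (18*k + 1) (24*k - 1 - (e+0))) (54*k - 1 - (3*e+2))) - maxn (maxn (0) (12*k - 1 - (e+0))) (0 - (3*e+2))))%N.
  move=> e he; rewrite -count6; apply: eq_big_nat => a ha; congr (nat_of_bool _).
  rewrite /cnd.
  have -> : (6*a+0 + (6*e+5) = 6*(a+e+0)+5)%N by lia.
have -> : (6*a+0 + 3*(6*e+5) = 6*(a+3*e+2)+3)%N by lia.
  rewrite !memW6 //= ?leq_subLR ?ltn_subRL; apply/idP/idP; lia.
rewrite (eq_big_nat _ _ E).
rewrite (@tele_step _ (0)%N (6*k - 2)%N _ (0 * k%:Z + (0)) (6 * k%:Z + (-2)) (1) ((6) * k%:Z + (2))); [|lia|lia|lia|move=> e he /=; piece ((18*k + 1))%N ((12*k - 1 - (e+0)))%N].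
rewrite (@tele_step _ (6*k - 2)%N (12*k - 1)%N _ (6 * k%:Z + (-2)) (12 * k%:Z + (-1)) (0) ((12) * k%:Z + (0))); [|lia|lia|lia|move=> e he /=; piece ((24*k - 1 - (e+0)))%N ((12*k - 1 - (e+0)))%N].
rewrite (@tele_step _ (12*k - 1)%N (15*k - 1)%N _ (12 * k%:Z + (-1)) (15 * k%:Z + (-1)) (-1) ((24) * k%:Z + (-1))); [|lia|lia|lia|move=> e he /=; piece ((24*k - 1 - (e+0)))%N ((0))%N].
rewrite (@tele_step _ (15*k - 1)%N (18*k - 1)%N _ (15 * k%:Z + (-1)) (18 * k%:Z + (-1)) (-3) ((54) * k%:Z + (-3))); [|lia|lia|lia|move=> e he /=; piece ((54*k - 1 - (3*e+2)))%N ((0))%N].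
rewrite (@tele_step _ (18*k - 1)%N (54*k + 1)%N _ (18 * k%:Z + (-1)) (54 * k%:Z + (1)) (0) ((0) * k%:Z + (0))); [|lia|lia|lia|move=> e he /=; piece ((54*k - 1 - (3*e+2)))%N ((0))%N].
rewrite big_geq // muln0 addr0.
ring.
Qed.

Lemma case_1_0 k : (0 < k)%N -> (2*(\sum_(0 <= e < 54*k+1) \sum_(0 <= a < 54*k+1) cnd k (6*a+1) (6*e+0))%N)%N%:Z = (0) * k%:Z ^+ 0 + (-12) * k%:Z ^+ 1 + (48) * k%:Z ^+ 2.
Proof.
move=> kp.
have E : forall e, (0 <= e < 54*k+1)%N -> (\sum_(0 <= a < 54*k+1) cnd k (6*a+1) (6*e+0))%N = ((0 < e)%N * (minn (54*k+1) (minn (minn (24*k) (24*k - (e+0))) (24*k - (3*e+0))) - maxn (maxn (12*k) (12*k - (e+0))) (12*k - (3*e+0))))%N.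
  move=> e he; rewrite -count6; apply: eq_big_nat => a ha; congr (nat_of_bool _).
  rewrite /cnd.
  have -> : (6*a+1 + (6*e+0) = 6*(a+e+0)+1)%N by lia.
have -> : (6*a+1 + 3*(6*e+0) = 6*(a+3*e+0)+1)%N by lia.
  rewrite !memW6 //= ?leq_subLR ?ltn_subRL; apply/idP/idP; lia.
rewrite (eq_big_nat _ _ E).
rewrite (@tele_step _ (0)%N (1)%N _ (0 * k%:Z + (0)) (0 * k%:Z + (1)) (0) ((0) * k%:Z + (0))); [|lia|lia|lia|move=> e he /=; piece ((24*k))%N ((12*k))%N].
rewrite (@tele_step _ (1)%N (4*k)%N _ (0 * k%:Z + (1)) (4 * k%:Z + (0)) (-3) ((12) * k%:Z + (0))); [|lia|lia|lia|move=> e he /=; piece ((24*k - (3*e+0)))%N ((12*k))%N].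
rewrite (@tele_step _ (4*k)%N (54*k + 1)%N _ (4 * k%:Z + (0)) (54 * k%:Z + (1)) (0) ((0) * k%:Z + (0))); [|lia|lia|lia|move=> e he /=; piece ((24*k - (3*e+0)))%N ((12*k))%N].
rewrite big_geq // muln0 addr0.
ring.
Qed.

Lemma case_1_1 k : (\sum_(0 <= e < 54*k+1) \sum_(0 <= a < 54*k+1) cnd k (6*a+1) (6*e+1))%N = 0%N.
Proof.
rewrite big1 // => e _; rewrite big1 // => a _.
rewrite /cnd.
have -> : (6*a+1 + (6*e+1) = 6*(a+e+0)+2)%N by lia.
have -> : (6*a+1 + 3*(6*e+1) = 6*(a+3*e+0)+4)%N by lia.
by rewrite !memW6 //= ?andbF.
Qed.

Lemma case_1_2 k : (0 < k)%N -> (2*(\sum_(0 <= e < 54*k+1) \sum_(0 <= a < 54*k+1) cnd k (6*a+1) (6*e+2))%N)%N%:Z = (0) * k%:Z ^+ 0 + (4) * k%:Z ^+ 1 + (48) * k%:Z ^+ 2.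
Proof.
move=> kp.
have E : forall e, (0 <= e < 54*k+1)%N -> (\sum_(0 <= a < 54*k+1) cnd k (6*a+1) (6*e+2))%N = (true * (minn (54*k+1) (minn (minn (24*k) (54*k - 1 - (e+0))) (24*k - (3*e+1))) - maxn (maxn (12*k) (0 - (e+0))) (12*k - (3*e+1))))%N.
  move=> e he; rewrite -count6; apply: eq_big_nat => a ha; congr (nat_of_bool _).
  rewrite /cnd.
  have -> : (6*a+1 + (6*e+2) = 6*(a+e+0)+3)%N by lia.
have -> : (6*a+1 + 3*(6*e+2) = 6*(a+3*e+1)+1)%N by lia.
  rewrite !memW6 //= ?leq_subLR ?ltn_subRL; apply/idP/idP; lia.
rewrite (eq_big_nat _ _ E).
rewrite (@tele_step _ (0)%N (4*k)%N _ (0 * k%:Z + (0)) (4 * k%:Z + (0)) (-3) ((12) * k%:Z + (-1))); [|lia|lia|lia|move=> e he /=; piece ((24*k - (3*e+1)))%N ((12*k))%N].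
rewrite (@tele_step _ (4*k)%N (54*k + 1)%N _ (4 * k%:Z + (0)) (54 * k%:Z + (1)) (0) ((0) * k%:Z + (0))); [|lia|lia|lia|move=> e he /=; piece ((24*k - (3*e+1)))%N ((12*k))%N].
rewrite big_geq // muln0 addr0.
ring.
Qed.

Lemma case_1_3 k : (\sum_(0 <= e < 54*k+1) \sum_(0 <= a < 54*k+1) cnd k (6*a+1) (6*e+3))%N = 0%N.
Proof.
rewrite big1 // => e _; rewrite big1 // => a _.
rewrite /cnd.
have -> : (6*a+1 + (6*e+3) = 6*(a+e+0)+4)%N by lia.
have -> : (6*a+1 + 3*(6*e+3) = 6*(a+3*e+1)+4)%N by lia.
by rewrite !memW6 //= ?andbF.
Qed.

Lemma case_1_4 k : (0 < k)%N -> (2*(\sum_(0 <= e < 54*k+1) \sum_(0 <= a < 54*k+1) cnd k (6*a+1) (6*e+4))%N)%N%:Z = (0) * k%:Z ^+ 0 + (-4) * k%:Z ^+ 1 + (48) * k%:Z ^+ 2.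
Proof.
move=> kp.
have E : forall e, (0 <= e < 54*k+1)%N -> (\sum_(0 <= a < 54*k+1) cnd k (6*a+1) (6*e+4))%N = (true * (minn (54*k+1) (minn (minn (24*k) (24*k - 1 - (e+0))) (24*k - (3*e+2))) - maxn (maxn (12*k) (12*k - 1 - (e+0))) (12*k - (3*e+2))))%N.
  move=> e he; rewrite -count6; apply: eq_big_nat => a ha; congr (nat_of_bool _).
  rewrite /cnd.
  have -> : (6*a+1 + (6*e+4) = 6*(a+e+0)+5)%N by lia.
have -> : (6*a+1 + 3*(6*e+4) = 6*(a+3*e+2)+1)%N by lia.
  rewrite !memW6 //= ?leq_subLR ?ltn_subRL; apply/idP/idP; lia.
rewrite (eq_big_nat _ _ E).
rewrite (@tele_step _ (0)%N (4*k)%N _ (0 * k%:Z + (0)) (4 * k%:Z + (0)) (-3) ((12) * k%:Z + (-2))); [|lia|lia|lia|move=> e he /=; piece ((24*k - (3*e+2)))%N ((12*k))%N].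
rewrite (@tele_step _ (4*k)%N (54*k + 1)%N _ (4 * k%:Z + (0)) (54 * k%:Z + (1)) (0) ((0) * k%:Z + (0))); [|lia|lia|lia|move=> e he /=; piece ((24*k - (3*e+2)))%N ((12*k))%N].
rewrite big_geq // muln0 addr0.
ring.
Qed.

Lemma case_1_5 k : (\sum_(0 <= e < 54*k+1) \sum_(0 <= a < 54*k+1) cnd k (6*a+1) (6*e+5))%N = 0%N.
Proof.
rewrite big1 // => e _; rewrite big1 // => a _.
rewrite /cnd.
have -> : (6*a+1 + (6*e+5) = 6*(a+e+1)+0)%N by lia.
have -> : (6*a+1 + 3*(6*e+5) = 6*(a+3*e+2)+4)%N by lia.
by rewrite !memW6 //= ?andbF.
Qed.

Lemma case_2_0 k : (\sum_(0 <= e < 54*k+1) \sum_(0 <= a < 54*k+1) cnd k (6*a+2) (6*e+0))%N = 0%N.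
Proof.
rewrite big1 // => e _; rewrite big1 // => a _.
rewrite /cnd.
have -> : (6*a+2 + (6*e+0) = 6*(a+e+0)+2)%N by lia.
have -> : (6*a+2 + 3*(6*e+0) = 6*(a+3*e+0)+2)%N by lia.
by rewrite !memW6 //= ?andbF.
Qed.

Lemma case_2_1 k : (\sum_(0 <= e < 54*k+1) \sum_(0 <= a < 54*k+1) cnd k (6*a+2) (6*e+1))%N = 0%N.
Proof.
rewrite big1 // => e _; rewrite big1 // => a _.
rewrite /cnd.
have -> : (6*a+2 + (6*e+1) = 6*(a+e+0)+3)%N by lia.
have -> : (6*a+2 + 3*(6*e+1) = 6*(a+3*e+0)+5)%N by lia.
by rewrite !memW6 //= ?andbF.
Qed.

Lemma case_2_2 k : (\sum_(0 <= e < 54*k+1) \sum_(0 <= a < 54*k+1) cnd k (6*a+2) (6*e+2))%N = 0%N.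
Proof.
rewrite big1 // => e _; rewrite big1 // => a _.
rewrite /cnd.
have -> : (6*a+2 + (6*e+2) = 6*(a+e+0)+4)%N by lia.
have -> : (6*a+2 + 3*(6*e+2) = 6*(a+3*e+1)+2)%N by lia.
by rewrite !memW6 //= ?andbF.
Qed.

Lemma case_2_3 k : (\sum_(0 <= e < 54*k+1) \sum_(0 <= a < 54*k+1) cnd k (6*a+2) (6*e+3))%N = 0%N.
Proof.
rewrite big1 // => e _; rewrite big1 // => a _.
rewrite /cnd.
have -> : (6*a+2 + (6*e+3) = 6*(a+e+0)+5)%N by lia.
have -> : (6*a+2 + 3*(6*e+3) = 6*(a+3*e+1)+5)%N by lia.
by rewrite !memW6 //= ?andbF.
Qed.

Lemma case_2_4 k : (\sum_(0 <= e < 54*k+1) \sum_(0 <= a < 54*k+1) cnd k (6*a+2) (6*e+4))%N = 0%N.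
Proof.
rewrite big1 // => e _; rewrite big1 // => a _.
rewrite /cnd.
have -> : (6*a+2 + (6*e+4) = 6*(a+e+1)+0)%N by lia.
have -> : (6*a+2 + 3*(6*e+4) = 6*(a+3*e+2)+2)%N by lia.
by rewrite !memW6 //= ?andbF.
Qed.

Lemma case_2_5 k : (\sum_(0 <= e < 54*k+1) \sum_(0 <= a < 54*k+1) cnd k (6*a+2) (6*e+5))%N = 0%N.
Proof.
rewrite big1 // => e _; rewrite big1 // => a _.
rewrite /cnd.
have -> : (6*a+2 + (6*e+5) = 6*(a+e+1)+1)%N by lia.
have -> : (6*a+2 + 3*(6*e+5) = 6*(a+3*e+2)+5)%N by lia.
by rewrite !memW6 //= ?andbF.
Qed.

Lemma case_3_0 k : (0 < k)%N -> (2*(\sum_(0 <= e < 54*k+1) \sum_(0 <= a < 54*k+1) cnd k (6*a+3) (6*e+0))%N)%N%:Z = (2) * k%:Z ^+ 0 + (-90) * k%:Z ^+ 1 + (972) * k%:Z ^+ 2.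
Proof.
move=> kp.
have E : forall e, (0 <= e < 54*k+1)%N -> (\sum_(0 <= a < 54*k+1) cnd k (6*a+3) (6*e+0))%N = ((0 < e)%N * (minn (54*k+1) (minn (minn (54*k - 1) (54*k - 1 - (e+0))) (54*k - 1 - (3*e+0))) - maxn (maxn (0) (0 - (e+0))) (0 - (3*e+0))))%N.
  move=> e he; rewrite -count6; apply: eq_big_nat => a ha; congr (nat_of_bool _).
  rewrite /cnd.
  have -> : (6*a+3 + (6*e+0) = 6*(a+e+0)+3)%N by lia.
have -> : (6*a+3 + 3*(6*e+0) = 6*(a+3*e+0)+3)%N by lia.
  rewrite !memW6 //= ?leq_subLR ?ltn_subRL; apply/idP/idP; lia.
rewrite (eq_big_nat _ _ E).
rewrite (@tele_step _ (0)%N (1)%N _ (0 * k%:Z + (0)) (0 * k%:Z + (1)) (0) ((0) * k%:Z + (0))); [|lia|lia|lia|move=> e he /=; piece ((54*k - 1))%N ((0))%N].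
rewrite (@tele_step _ (1)%N (18*k)%N _ (0 * k%:Z + (1)) (18 * k%:Z + (0)) (-3) ((54) * k%:Z + (-1))); [|lia|lia|lia|move=> e he /=; piece ((54*k - 1 - (3*e+0)))%N ((0))%N].
rewrite (@tele_step _ (18*k)%N (54*k + 1)%N _ (18 * k%:Z + (0)) (54 * k%:Z + (1)) (0) ((0) * k%:Z + (0))); [|lia|lia|lia|move=> e he /=; piece ((54*k - 1 - (3*e+0)))%N ((0))%N].
rewrite big_geq // muln0 addr0.
ring.
Qed.

Lemma case_3_1 k : (\sum_(0 <= e < 54*k+1) \sum_(0 <= a < 54*k+1) cnd k (6*a+3) (6*e+1))%N = 0%N.
Proof.
rewrite big1 // => e _; rewrite big1 // => a _.
rewrite /cnd.
have -> : (6*a+3 + (6*e+1) = 6*(a+e+0)+4)%N by lia.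
have -> : (6*a+3 + 3*(6*e+1) = 6*(a+3*e+1)+0)%N by lia.
by rewrite !memW6 //= ?andbF.
Qed.

Lemma case_3_2 k : (0 < k)%N -> (2*(\sum_(0 <= e < 54*k+1) \sum_(0 <= a < 54*k+1) cnd k (6*a+3) (6*e+2))%N)%N%:Z = (0) * k%:Z ^+ 0 + (-6) * k%:Z ^+ 1 + (378) * k%:Z ^+ 2.
Proof.
move=> kp.
have E : forall e, (0 <= e < 54*k+1)%N -> (\sum_(0 <= a < 54*k+1) cnd k (6*a+3) (6*e+2))%N = (true * (minn (54*k+1) (minn (minn (54*k - 1) (24*k - 1 - (e+0))) (54*k - 1 - (3*e+1))) - maxn (maxn (0) (12*k - 1 - (e+0))) (0 - (3*e+1))))%N.
  move=> e he; rewrite -count6; apply: eq_big_nat => a ha; congr (nat_of_bool _).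
  rewrite /cnd.
  have -> : (6*a+3 + (6*e+2) = 6*(a+e+0)+5)%N by lia.
have -> : (6*a+3 + 3*(6*e+2) = 6*(a+3*e+1)+3)%N by lia.
  rewrite !memW6 //= ?leq_subLR ?ltn_subRL; apply/idP/idP; lia.
rewrite (eq_big_nat _ _ E).
rewrite (@tele_step _ (0)%N (12*k - 1)%N _ (0 * k%:Z + (0)) (12 * k%:Z + (-1)) (0) ((12) * k%:Z + (0))); [|lia|lia|lia|move=> e he /=; piece ((24*k - 1 - (e+0)))%N ((12*k - 1 - (e+0)))%N].
rewrite (@tele_step _ (12*k - 1)%N (15*k)%N _ (12 * k%:Z + (-1)) (15 * k%:Z + (0)) (-1) ((24) * k%:Z + (-1))); [|lia|lia|lia|move=> e he /=; piece ((24*k - 1 - (e+0)))%N ((0))%N].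
rewrite (@tele_step _ (15*k)%N (18*k)%N _ (15 * k%:Z + (0)) (18 * k%:Z + (0)) (-3) ((54) * k%:Z + (-2))); [|lia|lia|lia|move=> e he /=; piece ((54*k - 1 - (3*e+1)))%N ((0))%N].
rewrite (@tele_step _ (18*k)%N (54*k + 1)%N _ (18 * k%:Z + (0)) (54 * k%:Z + (1)) (0) ((0) * k%:Z + (0))); [|lia|lia|lia|move=> e he /=; piece ((54*k - 1 - (3*e+1)))%N ((0))%N].
rewrite big_geq // muln0 addr0.
ring.
Qed.

Lemma case_3_3 k : (0 < k)%N -> (2*(\sum_(0 <= e < 54*k+1) \sum_(0 <= a < 54*k+1) cnd k (6*a+3) (6*e+3))%N)%N%:Z = (0) * k%:Z ^+ 0 + (6) * k%:Z ^+ 1 + (108) * k%:Z ^+ 2.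
Proof.
move=> kp.
have E : forall e, (0 <= e < 54*k+1)%N -> (\sum_(0 <= a < 54*k+1) cnd k (6*a+3) (6*e+3))%N = (true * (minn (54*k+1) (minn (minn (54*k - 1) (18*k + 1 - (e+1))) (18*k + 1 - (3*e+2))) - maxn (maxn (0) (0 - (e+1))) (0 - (3*e+2))))%N.
  move=> e he; rewrite -count6; apply: eq_big_nat => a ha; congr (nat_of_bool _).
  rewrite /cnd.
  have -> : (6*a+3 + (6*e+3) = 6*(a+e+1)+0)%N by lia.
have -> : (6*a+3 + 3*(6*e+3) = 6*(a+3*e+2)+0)%N by lia.
  rewrite !memW6 //= ?leq_subLR ?ltn_subRL; apply/idP/idP; lia.
rewrite (eq_big_nat _ _ E).
rewrite (@tele_step _ (0)%N (6*k)%N _ (0 * k%:Z + (0)) (6 * k%:Z + (0)) (-3) ((18) * k%:Z + (-1))); [|lia|lia|lia|move=> e he /=; piece ((18*k + 1 - (3*e+2)))%N ((0))%N].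
rewrite (@tele_step _ (6*k)%N (54*k + 1)%N _ (6 * k%:Z + (0)) (54 * k%:Z + (1)) (0) ((0) * k%:Z + (0))); [|lia|lia|lia|move=> e he /=; piece ((18*k + 1 - (3*e+2)))%N ((0))%N].
rewrite big_geq // muln0 addr0.
ring.
Qed.

Lemma case_3_4 k : (0 < k)%N -> (2*(\sum_(0 <= e < 54*k+1) \sum_(0 <= a < 54*k+1) cnd k (6*a+3) (6*e+4))%N)%N%:Z = (0) * k%:Z ^+ 0 + (-12) * k%:Z ^+ 1 + (378) * k%:Z ^+ 2.
Proof.
move=> kp.
have E : forall e, (0 <= e < 54*k+1)%N -> (\sum_(0 <= a < 54*k+1) cnd k (6*a+3) (6*e+4))%N = (true * (minn (54*k+1) (minn (minn (54*k - 1) (24*k - (e+1))) (54*k - 1 - (3*e+2))) - maxn (maxn (0) (12*k - (e+1))) (0 - (3*e+2))))%N.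
  move=> e he; rewrite -count6; apply: eq_big_nat => a ha; congr (nat_of_bool _).
  rewrite /cnd.
  have -> : (6*a+3 + (6*e+4) = 6*(a+e+1)+1)%N by lia.
have -> : (6*a+3 + 3*(6*e+4) = 6*(a+3*e+2)+3)%N by lia.
  rewrite !memW6 //= ?leq_subLR ?ltn_subRL; apply/idP/idP; lia.
rewrite (eq_big_nat _ _ E).
rewrite (@tele_step _ (0)%N (12*k - 1)%N _ (0 * k%:Z + (0)) (12 * k%:Z + (-1)) (0) ((12) * k%:Z + (0))); [|lia|lia|lia|move=> e he /=; piece ((24*k - (e+1)))%N ((12*k - (e+1)))%N].
rewrite (@tele_step _ (12*k - 1)%N (15*k - 1)%N _ (12 * k%:Z + (-1)) (15 * k%:Z + (-1)) (-1) ((24) * k%:Z + (-1))); [|lia|lia|lia|move=> e he /=; piece ((24*k - (e+1)))%N ((0))%N].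
rewrite (@tele_step _ (15*k - 1)%N (18*k - 1)%N _ (15 * k%:Z + (-1)) (18 * k%:Z + (-1)) (-3) ((54) * k%:Z + (-3))); [|lia|lia|lia|move=> e he /=; piece ((54*k - 1 - (3*e+2)))%N ((0))%N].
rewrite (@tele_step _ (18*k - 1)%N (54*k + 1)%N _ (18 * k%:Z + (-1)) (54 * k%:Z + (1)) (0) ((0) * k%:Z + (0))); [|lia|lia|lia|move=> e he /=; piece ((54*k - 1 - (3*e+2)))%N ((0))%N].
rewrite big_geq // muln0 addr0.
ring.
Qed.

Lemma case_3_5 k : (\sum_(0 <= e < 54*k+1) \sum_(0 <= a < 54*k+1) cnd k (6*a+3) (6*e+5))%N = 0%N.
Proof.
rewrite big1 // => e _; rewrite big1 // => a _.
rewrite /cnd.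
have -> : (6*a+3 + (6*e+5) = 6*(a+e+1)+2)%N by lia.
have -> : (6*a+3 + 3*(6*e+5) = 6*(a+3*e+3)+0)%N by lia.
by rewrite !memW6 //= ?andbF.
Qed.

Lemma case_4_0 k : (\sum_(0 <= e < 54*k+1) \sum_(0 <= a < 54*k+1) cnd k (6*a+4) (6*e+0))%N = 0%N.
Proof.
rewrite big1 // => e _; rewrite big1 // => a _.
rewrite /cnd.
have -> : (6*a+4 + (6*e+0) = 6*(a+e+0)+4)%N by lia.
have -> : (6*a+4 + 3*(6*e+0) = 6*(a+3*e+0)+4)%N by lia.
by rewrite !memW6 //= ?andbF.
Qed.

Lemma case_4_1 k : (\sum_(0 <= e < 54*k+1) \sum_(0 <= a < 54*k+1) cnd k (6*a+4) (6*e+1))%N = 0%N.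
Proof.
rewrite big1 // => e _; rewrite big1 // => a _.
rewrite /cnd.
have -> : (6*a+4 + (6*e+1) = 6*(a+e+0)+5)%N by lia.
have -> : (6*a+4 + 3*(6*e+1) = 6*(a+3*e+1)+1)%N by lia.
by rewrite !memW6 //= ?andbF.
Qed.

Lemma case_4_2 k : (\sum_(0 <= e < 54*k+1) \sum_(0 <= a < 54*k+1) cnd k (6*a+4) (6*e+2))%N = 0%N.
Proof.
rewrite big1 // => e _; rewrite big1 // => a _.
rewrite /cnd.
have -> : (6*a+4 + (6*e+2) = 6*(a+e+1)+0)%N by lia.
have -> : (6*a+4 + 3*(6*e+2) = 6*(a+3*e+1)+4)%N by lia.
by rewrite !memW6 //= ?andbF.
Qed.

Lemma case_4_3 k : (\sum_(0 <= e < 54*k+1) \sum_(0 <= a < 54*k+1) cnd k (6*a+4) (6*e+3))%N = 0%N.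
Proof.
rewrite big1 // => e _; rewrite big1 // => a _.
rewrite /cnd.
have -> : (6*a+4 + (6*e+3) = 6*(a+e+1)+1)%N by lia.
have -> : (6*a+4 + 3*(6*e+3) = 6*(a+3*e+2)+1)%N by lia.
by rewrite !memW6 //= ?andbF.
Qed.

Lemma case_4_4 k : (\sum_(0 <= e < 54*k+1) \sum_(0 <= a < 54*k+1) cnd k (6*a+4) (6*e+4))%N = 0%N.
Proof.
rewrite big1 // => e _; rewrite big1 // => a _.
rewrite /cnd.
have -> : (6*a+4 + (6*e+4) = 6*(a+e+1)+2)%N by lia.
have -> : (6*a+4 + 3*(6*e+4) = 6*(a+3*e+2)+4)%N by lia.
by rewrite !memW6 //= ?andbF.
Qed.

Lemma case_4_5 k : (\sum_(0 <= e < 54*k+1) \sum_(0 <= a < 54*k+1) cnd k (6*a+4) (6*e+5))%N = 0%N.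
Proof.
rewrite big1 // => e _; rewrite big1 // => a _.
rewrite /cnd.
have -> : (6*a+4 + (6*e+5) = 6*(a+e+1)+3)%N by lia.
have -> : (6*a+4 + 3*(6*e+5) = 6*(a+3*e+3)+1)%N by lia.
by rewrite !memW6 //= ?andbF.
Qed.

Lemma case_5_0 k : (0 < k)%N -> (2*(\sum_(0 <= e < 54*k+1) \sum_(0 <= a < 54*k+1) cnd k (6*a+5) (6*e+0))%N)%N%:Z = (0) * k%:Z ^+ 0 + (-12) * k%:Z ^+ 1 + (48) * k%:Z ^+ 2.
Proof.
move=> kp.
have E : forall e, (0 <= e < 54*k+1)%N -> (\sum_(0 <= a < 54*k+1) cnd k (6*a+5) (6*e+0))%N = ((0 < e)%N * (minn (54*k+1) (minn (minn (24*k - 1) (24*k - 1 - (e+0))) (24*k - 1 - (3*e+0))) - maxn (maxn (12*k - 1) (12*k - 1 - (e+0))) (12*k - 1 - (3*e+0))))%N.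
  move=> e he; rewrite -count6; apply: eq_big_nat => a ha; congr (nat_of_bool _).
  rewrite /cnd.
  have -> : (6*a+5 + (6*e+0) = 6*(a+e+0)+5)%N by lia.
have -> : (6*a+5 + 3*(6*e+0) = 6*(a+3*e+0)+5)%N by lia.
  rewrite !memW6 //= ?leq_subLR ?ltn_subRL; apply/idP/idP; lia.
rewrite (eq_big_nat _ _ E).
rewrite (@tele_step _ (0)%N (1)%N _ (0 * k%:Z + (0)) (0 * k%:Z + (1)) (0) ((0) * k%:Z + (0))); [|lia|lia|lia|move=> e he /=; piece ((24*k - 1))%N ((12*k - 1))%N].
rewrite (@tele_step _ (1)%N (4*k)%N _ (0 * k%:Z + (1)) (4 * k%:Z + (0)) (-3) ((12) * k%:Z + (0))); [|lia|lia|lia|move=> e he /=; piece ((24*k - 1 - (3*e+0)))%N ((12*k - 1))%N].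
rewrite (@tele_step _ (4*k)%N (54*k + 1)%N _ (4 * k%:Z + (0)) (54 * k%:Z + (1)) (0) ((0) * k%:Z + (0))); [|lia|lia|lia|move=> e he /=; piece ((24*k - 1 - (3*e+0)))%N ((12*k - 1))%N].
rewrite big_geq // muln0 addr0.
ring.
Qed.

Lemma case_5_1 k : (\sum_(0 <= e < 54*k+1) \sum_(0 <= a < 54*k+1) cnd k (6*a+5) (6*e+1))%N = 0%N.
Proof.
rewrite big1 // => e _; rewrite big1 // => a _.
rewrite /cnd.
have -> : (6*a+5 + (6*e+1) = 6*(a+e+1)+0)%N by lia.
have -> : (6*a+5 + 3*(6*e+1) = 6*(a+3*e+1)+2)%N by lia.
by rewrite !memW6 //= ?andbF.
Qed.

Lemma case_5_2 k : (0 < k)%N -> (2*(\sum_(0 <= e < 54*k+1) \sum_(0 <= a < 54*k+1) cnd k (6*a+5) (6*e+2))%N)%N%:Z = (0) * k%:Z ^+ 0 + (4) * k%:Z ^+ 1 + (48) * k%:Z ^+ 2.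
Proof.
move=> kp.
have E : forall e, (0 <= e < 54*k+1)%N -> (\sum_(0 <= a < 54*k+1) cnd k (6*a+5) (6*e+2))%N = (true * (minn (54*k+1) (minn (minn (24*k - 1) (24*k - (e+1))) (24*k - 1 - (3*e+1))) - maxn (maxn (12*k - 1) (12*k - (e+1))) (12*k - 1 - (3*e+1))))%N.
  move=> e he; rewrite -count6; apply: eq_big_nat => a ha; congr (nat_of_bool _).
  rewrite /cnd.
  have -> : (6*a+5 + (6*e+2) = 6*(a+e+1)+1)%N by lia.
have -> : (6*a+5 + 3*(6*e+2) = 6*(a+3*e+1)+5)%N by lia.
  rewrite !memW6 //= ?leq_subLR ?ltn_subRL; apply/idP/idP; lia.
rewrite (eq_big_nat _ _ E).
rewrite (@tele_step _ (0)%N (4*k)%N _ (0 * k%:Z + (0)) (4 * k%:Z + (0)) (-3) ((12) * k%:Z + (-1))); [|lia|lia|lia|move=> e he /=; piece ((24*k - 1 - (3*e+1)))%N ((12*k - 1))%N].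
rewrite (@tele_step _ (4*k)%N (54*k + 1)%N _ (4 * k%:Z + (0)) (54 * k%:Z + (1)) (0) ((0) * k%:Z + (0))); [|lia|lia|lia|move=> e he /=; piece ((24*k - 1 - (3*e+1)))%N ((12*k - 1))%N].
rewrite big_geq // muln0 addr0.
ring.
Qed.

Lemma case_5_3 k : (\sum_(0 <= e < 54*k+1) \sum_(0 <= a < 54*k+1) cnd k (6*a+5) (6*e+3))%N = 0%N.
Proof.
rewrite big1 // => e _; rewrite big1 // => a _.
rewrite /cnd.
have -> : (6*a+5 + (6*e+3) = 6*(a+e+1)+2)%N by lia.
have -> : (6*a+5 + 3*(6*e+3) = 6*(a+3*e+2)+2)%N by lia.
by rewrite !memW6 //= ?andbF.
Qed.

Lemma case_5_4 k : (0 < k)%N -> (2*(\sum_(0 <= e < 54*k+1) \sum_(0 <= a < 54*k+1) cnd k (6*a+5) (6*e+4))%N)%N%:Z = (0) * k%:Z ^+ 0 + (-4) * k%:Z ^+ 1 + (48) * k%:Z ^+ 2.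
Proof.
move=> kp.
have E : forall e, (0 <= e < 54*k+1)%N -> (\sum_(0 <= a < 54*k+1) cnd k (6*a+5) (6*e+4))%N = (true * (minn (54*k+1) (minn (minn (24*k - 1) (54*k - 1 - (e+1))) (24*k - 1 - (3*e+2))) - maxn (maxn (12*k - 1) (0 - (e+1))) (12*k - 1 - (3*e+2))))%N.
  move=> e he; rewrite -count6; apply: eq_big_nat => a ha; congr (nat_of_bool _).
  rewrite /cnd.
  have -> : (6*a+5 + (6*e+4) = 6*(a+e+1)+3)%N by lia.
have -> : (6*a+5 + 3*(6*e+4) = 6*(a+3*e+2)+5)%N by lia.
  rewrite !memW6 //= ?leq_subLR ?ltn_subRL; apply/idP/idP; lia.
rewrite (eq_big_nat _ _ E).
rewrite (@tele_step _ (0)%N (4*k - 1)%N _ (0 * k%:Z + (0)) (4 * k%:Z + (-1)) (-3) ((12) * k%:Z + (-2))); [|lia|lia|lia|move=> e he /=; piece ((24*k - 1 - (3*e+2)))%N ((12*k - 1))%N].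
rewrite (@tele_step _ (4*k - 1)%N (4*k)%N _ (4 * k%:Z + (-1)) (4 * k%:Z + (0)) (0) ((0) * k%:Z + (1))); [|lia|lia|lia|move=> e he /=; piece ((24*k - 1 - (3*e+2)))%N ((12*k - 1))%N].
rewrite (@tele_step _ (4*k)%N (54*k + 1)%N _ (4 * k%:Z + (0)) (54 * k%:Z + (1)) (0) ((0) * k%:Z + (0))); [|lia|lia|lia|move=> e he /=; piece ((24*k - 1 - (3*e+2)))%N ((12*k - 1))%N].
rewrite big_geq // muln0 addr0.
ring.
Qed.

Lemma case_5_5 k : (\sum_(0 <= e < 54*k+1) \sum_(0 <= a < 54*k+1) cnd k (6*a+5) (6*e+5))%N = 0%N.
Proof.
rewrite big1 // => e _; rewrite big1 // => a _.
rewrite /cnd.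
have -> : (6*a+5 + (6*e+5) = 6*(a+e+1)+4)%N by lia.
have -> : (6*a+5 + 3*(6*e+5) = 6*(a+3*e+3)+2)%N by lia.
by rewrite !memW6 //= ?andbF.
Qed.

Definition Wn (k : nat) : seq nat :=
  [seq (6 * a + 0)%N | a <- seq.iota 0 (18 * k + 1)] ++ [seq (6 * a + 1)%N | a <- seq.iota (12 * k) (12 * k)] ++
  [seq (6 * a + 3)%N | a <- seq.iota 0 (54 * k - 1)] ++ [seq (6 * a + 5)%N | a <- seq.iota (12 * k - 1) (12 * k)].

Lemma mem_map6 c m n y : (c < 6)%N ->
  (y \in [seq (6 * a + c)%N | a <- seq.iota m n]) = ((y %% 6 == c) && (m <= y %/ 6 < m + n))%N.
Proof.
move=> hc; apply/mapP/idP.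
  move=> [a]; rewrite mem_iota => ha ->.
  by rewrite (mulnC 6 a) modnMDl divnMDl // modn_small // divn_small // addn0 eqxx.
move=> /andP[/eqP hy hq]; exists (y %/ 6)%N; first by rewrite mem_iota.
by rewrite {1}(divn_eq y 6) hy mulnC.
Qed.

Lemma memWn k y : (0 < k)%N -> (y \in Wn k) = memW k y.
Proof.
move=> kp; rewrite !mem_cat !mem_map6 // /memW.
have : (y %% 6 < 6)%N by rewrite ltn_pmod.
case: (y %% 6)%N => [|[|[|[|[|[|c]]]]]] //= _; lia.
Qed.

Lemma memW_lt k y : memW k y -> (y < 6 * (54 * k + 1))%N.
Proof.
rewrite /memW => h.
have h1 := divn_eq y 6; have h2 : (y %% 6 < 6)%N by rewrite ltn_pmod.
move: h h1 h2; case: (y %% 6)%N => [|[|[|[|[|[|c]]]]]] //= h h1 h2; lia.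
Qed.

Lemma uniq_map6 c m n : uniq [seq (6 * a + c)%N | a <- seq.iota m n].
Proof. by rewrite map_inj_uniq ?iota_uniq // => a b /eqP; rewrite eqn_add2r eqn_mul2l /= => /eqP. Qed.

Lemma disj6 c c' m n m' n' : (c < 6)%N -> (c' < 6)%N -> c != c' ->
  has (in_mem^~ (mem [seq (6 * a + c)%N | a <- seq.iota m n])) [seq (6 * a + c')%N | a <- seq.iota m' n'] = false.
Proof.
move=> hc hc' hne; apply/negbTE/hasPn => y; rewrite mem_map6 // => /andP[/eqP hy _].
have := mem_map6 c m n y hc; rewrite hy eq_sym (negbTE hne) /= => h.
exact: negbT h.
Qed.

Lemma uniq_Wn k : uniq (Wn k).
Proof.
rewrite /Wn !cat_uniq !has_cat !uniq_map6 !disj6 //.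
Qed.

Lemma size_Wn k : (0 < k)%N -> size (Wn k) = (96 * k)%N.
Proof. move=> kp; rewrite /Wn !size_cat !size_map !size_iota; lia. Qed.

Section Main.
Variable R : realFieldType.

Lemma Vn_eq k : (0 < k)%N -> Vn R k = [seq n%:R | n <- Wn k].
Proof.
move=> kp; rewrite /Vn /Wn !map_cat /M0 /M1 /M3 /M5 -!map_comp.
have E : seq.iota (12 * k) (12 * k) = map (addn 1) (seq.iota (12 * k - 1) (12 * k)).
  by rewrite -iotaDl; congr seq.iota; lia.
congr (_ ++ (_ ++ (_ ++ _))).
all: try (by elim: (seq.iota 0 (18 * k + 1)) => //= a s ->; rewrite addn0).
rewrite E -map_comp; elim: (seq.iota (12 * k - 1) (12 * k)) => //= a s ->.
have -> : (6 * (1 + a) = (6 * a + 5) + 1)%N by lia.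
by rewrite natrD addrK.
Qed.
End Main.
Lemma asboolE (P : Prop) : asbool P = true <-> P.
Proof. by rewrite /asbool; case: excluded_middle_informative. Qed.

Section Count.
Variable R : realFieldType.
Variable W : seq nat.
Variable N : nat.
Hypothesis WN : forall y, y \in W -> (y < N)%N.

Let V : seq R := [seq n%:R | n <- W].
Let T := seq_sub V.

Definition phi (p : 'I_N * 'I_N) : {set T} :=
  [set z : T | [|| val z == (p.1 : nat)%:R, val z == (p.1 + p.2)%N%:R
                 | val z == (p.1 + 3 * p.2)%N%:R]].
Definition Dset : {set 'I_N * 'I_N} :=
  [set p : 'I_N * 'I_N | [&& (0 < (p.2 : nat))%N, (p.1 : nat) \in W, (p.1 + p.2)%N \in W & (p.1 + 3 * p.2)%N \in W]].

Lemma memV {n} : n \in W -> (n%:R : R) \in V.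
Proof. by move=> h; apply: map_f. Qed.

Lemma memV' {x : R} : x \in V -> exists2 n, n \in W & x = n%:R.
Proof. by move/mapP. Qed.

Lemma phi_mem {n} (Hn : n \in W) p :
  (SeqSub (memV Hn) \in phi p) = [|| n == p.1, n == (p.1 + p.2)%N | n == (p.1 + 3 * p.2)%N].
Proof. by rewrite inE /= !eqr_nat. Qed.

Lemma phi_inj : {in Dset &, injective phi}.
Proof.
move=> [p1 p2] [q1 q2]; rewrite !inE /= => /and4P[hp2 hp1 hp12 _] /and4P[hq2 hq1 hq12 _] E.
have m1 := phi_mem hp1 (q1, q2). have m2 := phi_mem hp12 (q1, q2).
have m3 := phi_mem hq1 (p1, p2). have m4 := phi_mem hq12 (p1, p2).
rewrite -E (phi_mem hp1 (p1,p2)) /= eqxx in m1.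
rewrite -E (phi_mem hp12 (p1,p2)) /= eqxx orbT in m2.
rewrite E (phi_mem hq1 (q1,q2)) /= eqxx in m3.
rewrite E (phi_mem hq12 (q1,q2)) /= eqxx orbT in m4.
move: m1 m2 m3 m4 => /esym m1 /esym m2 /esym m3 /esym m4.
have e1 : p1 = q1 :> nat by lia.
have e2 : p2 = q2 :> nat by lia.
by congr pair; apply: val_inj.
Qed.

Lemma pattern_eq : [set P : {set T} | asbool (in_pattern P)] = phi @: Dset.
Proof.
apply/setP => P; rewrite inE; apply/idP/imsetP.
- move/asboolE => [x [d [d0 [xV [xdV [x3dV HP]]]]]].
  have [nx nxW ex] := memV' xV.
  have [ny nyW ey] := memV' xdV.
  have [nz nzW ez] := memV' x3dV.
  have de : d = ny%:R - nx%:R by rewrite -ey ex; ring.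
  have lt : (nx < ny)%N by rewrite -(ltr_nat R) -subr_gt0 -de.
  have de' : d = (ny - nx)%N%:R by rewrite natrB ?de // ltnW.
  have ez' : nz = (nx + 3 * (ny - nx))%N.
    apply/eqP; rewrite -(eqr_nat R) -ez ex de' natrD natrM //.
  have hx : (nx < N)%N by apply: WN.
  have hd : (ny - nx < N)%N by apply: leq_ltn_trans (WN _ nyW); apply: leq_subr.
  exists (Ordinal hx, Ordinal hd).
    by rewrite inE /= subn_gt0 lt nxW (subnKC (ltnW lt)) nyW -ez' nzW.
  apply/setP => z; rewrite inE /=.
  apply/idP/idP.
    move/HP => [->|[->|->]]; rewrite ?ex ?de' -?natrM -?natrD ?eqxx ?orbT //.
  move=> /or3P[/eqP h|/eqP h|/eqP h]; apply/HP.
  + by left; rewrite ex -h.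
  + by right; left; rewrite ex de' -natrD -h.
  + by right; right; rewrite ex de' -natrM -natrD -h.
- move=> [[p1 p2] /=]; rewrite inE /= => /and4P[hp2 hp1 hp12 hp13] ->.
  apply/asboolE; exists (p1 : nat)%:R, (p2 : nat)%:R.
  split; first by rewrite ltr0n.
  split; first exact: memV.
  split; first by rewrite -natrD; exact: memV.
  split; first by rewrite -[3]/(3%:R) -natrM -natrD; exact: memV.
  move=> z; rewrite inE /=.
  split.
    move=> /or3P[/eqP h|/eqP h|/eqP h].
    * by left; rewrite h.
    * by right; left; rewrite h natrD.
    * by right; right; rewrite h natrD natrM.
  by move=> [->|[->|->]]; rewrite [((p1 + 3 * p2)%N)%:R]natrD natrM [((p1 + p2)%N)%:R]natrD eqxx ?orbT.
Qed.

Lemma SP_count :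
  S_P V = (\sum_(0 <= x < N) \sum_(0 <= d < N) [&& (0 < d)%N, x \in W, (x + d)%N \in W & (x + 3 * d)%N \in W])%N.
Proof.
rewrite /S_P pattern_eq card_in_imset; last exact: phi_inj.
transitivity (\sum_(i < N) \sum_(j < N) (((i, j) \in Dset) : nat))%N.
  rewrite pair_big /= -sum1_card big_mkcond /=.
  by apply: eq_bigr => [[i j]] _ /=; case: ((i, j) \in Dset).
rewrite big_mkord; apply: eq_bigr => i _; rewrite big_mkord; apply: eq_bigr => j _.
by rewrite inE.
Qed.
End Count.

Lemma split6 (F : nat -> nat) B :
  (\sum_(0 <= x < 6 * B) F x = \sum_(0 <= a < B) \sum_(0 <= r < 6) F (6 * a + r))%N.
Proof.
elim: B => [|B IH]; first by rewrite muln0 !big_geq.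
rewrite [RHS]big_nat_recr //= -IH.
have h1 : (0 <= 6 * B <= 6 * B.+1)%N by lia.
rewrite (big_cat_nat (n := (6 * B)%N)) //=; congr addn.
have -> : (6 * B.+1 = 6 + 6 * B)%N by lia.
rewrite -{1}[(6 * B)%N]add0n big_addn.
have -> : (6 + 6 * B - 6 * B = 6)%N by lia.
by apply: eq_big_nat => i _; rewrite addnC.
Qed.

Lemma sum6 (G : nat -> nat) :
  (\sum_(0 <= r < 6) G r = G 0 + (G 1 + (G 2 + (G 3 + (G 4 + (G 5 + 0))))))%N.
Proof. by rewrite !big_nat_recl // big_geq. Qed.

Definition Cnt k := (\sum_(0 <= x < 6 * (54 * k + 1)) \sum_(0 <= d < 6 * (54 * k + 1)) cnd k x d)%N.

Lemma Cnt_expand k : Cnt k = (((\sum_(0 <= j < 54 * k + 1) \sum_(0 <= i < 54 * k + 1) cnd k (6 * i + 0) (6 * j + 0)) + ((\sum_(0 <= j < 54 * k + 1) \sum_(0 <= i < 54 * k + 1) cnd k (6 * i + 0) (6 * j + 1)) + ((\sum_(0 <= j < 54 * k + 1) \sum_(0 <= i < 54 * k + 1) cnd k (6 * i + 0) (6 * j + 2)) + ((\sum_(0 <= j < 54 * k + 1) \sum_(0 <= i < 54 * k + 1) cnd k (6 * i + 0) (6 * j + 3)) + ((\sum_(0 <= j < 54 * k + 1) \sum_(0 <= i < 54 * k + 1) cnd k (6 * i + 0) (6 * j + 4)) + ((\sum_(0 <= j < 54 * k + 1) \sum_(0 <= i < 54 * k + 1) cnd k (6 * i + 0) (6 * j +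 5)) + 0)))))) + (((\sum_(0 <= j < 54 * k + 1) \sum_(0 <= i < 54 * k + 1) cnd k (6 * i + 1) (6 * j + 0)) + ((\sum_(0 <= j < 54 * k + 1) \sum_(0 <= i < 54 * k + 1) cnd k (6 * i + 1) (6 * j + 1)) + ((\sum_(0 <= j < 54 * k + 1) \sum_(0 <= i < 54 * k + 1) cnd k (6 * i + 1) (6 * j + 2)) + ((\sum_(0 <= j < 54 * k + 1) \sum_(0 <= i < 54 * k + 1) cnd k (6 * i + 1) (6 * j + 3)) + ((\sum_(0 <= j < 54 * k + 1) \sum_(0 <= i < 54 * k + 1) cnd k (6 * i + 1) (6 * j + 4)) + ((\sum_(0 <= j < 54 * k + 1) \sum_(0 <= i < 54 * k + 1) cnd k (6 * i + 1) (6 * j + 5)) + 0)))))) + (((\sum_(0 <= j < 54 * k + 1) \sum_(0 <= i < 54 * k + 1) cnd k (6 * i + 2) (6 * j + 0)) + ((\sum_(0 <= j < 54 * k + 1) \sum_(0 <= i < 54 * k + 1) cnd k (6 * i + 2) (6 * j + 1)) + ((\sum_(0 <= j < 54 * k + 1) \sum_(0 <= i < 54 * k + 1) cnd k (6 * i + 2) (6 * j + 2)) + ((\sum_(0 <= j < 54 * k + 1) \sum_(0 <= i < 54 * k + 1) cnd k (6 * i + 2) (6 * j + 3)) + ((\sum_(0 <= j < 54 * k + 1) \sum_(0 <= i < 54 * k + 1) cnd k (6 * i + 2) (6 * j + 4)) + ((\sum_(0 <= j < 54 * k + 1) \sum_(0 <= i < 54 * k + 1) cnd k (6 * i + 2)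 (6 * j + 5)) + 0)))))) + (((\sum_(0 <= j < 54 * k + 1) \sum_(0 <= i < 54 * k + 1) cnd k (6 * i + 3) (6 * j + 0)) + ((\sum_(0 <= j < 54 * k + 1) \sum_(0 <= i < 54 * k + 1) cnd k (6 * i + 3) (6 * j + 1)) + ((\sum_(0 <= j < 54 * k + 1) \sum_(0 <= i < 54 * k + 1) cnd k (6 * i + 3) (6 * j + 2)) + ((\sum_(0 <= j < 54 * k + 1) \sum_(0 <= i < 54 * k + 1) cnd k (6 * i + 3) (6 * j + 3)) + ((\sum_(0 <= j < 54 * k + 1) \sum_(0 <= i < 54 * k + 1) cnd k (6 * i + 3) (6 * j + 4)) + ((\sum_(0 <= j < 54 * k + 1) \sum_(0 <= i < 54 * k + 1) cnd k (6 * i + 3) (6 * j + 5)) + 0)))))) + (((\sum_(0 <= j < 54 * k + 1) \sum_(0 <= i < 54 * k + 1) cnd k (6 * i + 4) (6 * j + 0)) + ((\sum_(0 <= j < 54 * k + 1) \sum_(0 <= i < 54 * k + 1) cnd k (6 * i + 4) (6 * j + 1)) + ((\sum_(0 <= j < 54 * k + 1) \sum_(0 <= i < 54 * k + 1) cnd k (6 * i + 4) (6 * j + 2)) + ((\sum_(0 <= j < 54 * k + 1) \sum_(0 <= i < 54 * k + 1) cnd k (6 * i + 4) (6 * j + 3)) + ((\sum_(0 <= j < 54 * k + 1) \sum_(0 <= i < 54 * k + 1) cnd k (6 * i + 4) (6 * j + 4)) + ((\sum_(0 <= j < 54 * k + 1) \sum_(0 <= i < 54 * k + 1) cnd k (6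 * i + 4) (6 * j + 5)) + 0)))))) + (((\sum_(0 <= j < 54 * k + 1) \sum_(0 <= i < 54 * k + 1) cnd k (6 * i + 5) (6 * j + 0)) + ((\sum_(0 <= j < 54 * k + 1) \sum_(0 <= i < 54 * k + 1) cnd k (6 * i + 5) (6 * j + 1)) + ((\sum_(0 <= j < 54 * k + 1) \sum_(0 <= i < 54 * k + 1) cnd k (6 * i + 5) (6 * j + 2)) + ((\sum_(0 <= j < 54 * k + 1) \sum_(0 <= i < 54 * k + 1) cnd k (6 * i + 5) (6 * j + 3)) + ((\sum_(0 <= j < 54 * k + 1) \sum_(0 <= i < 54 * k + 1) cnd k (6 * i + 5) (6 * j + 4)) + ((\sum_(0 <= j < 54 * k + 1) \sum_(0 <= i < 54 * k + 1) cnd k (6 * i + 5) (6 * j + 5)) + 0)))))) + 0))))))%N.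
Proof.
rewrite /Cnt split6.
under eq_bigr => a _ do under eq_bigr => r _ do rewrite split6.
rewrite exchange_big /=.
under eq_bigr => r _ do under eq_bigr => a _ do rewrite exchange_big.
under eq_bigr => r _ do rewrite exchange_big.
under eq_bigr => r _ do under eq_bigr => s _ do rewrite exchange_big.
rewrite sum6 /=.
by rewrite !sum6 /=.
Qed.

Lemma Cnt_eq k : (0 < k)%N -> (2 * Cnt k)%N%:Z = 3456 * k%:Z ^+ 2 - 96 * k%:Z.
Proof.
move=> kp; rewrite Cnt_expand.
have := case_0_2 k.
have := case_0_4 k.
have := case_1_1 k.
have := case_1_3 k.
have := case_1_5 k.
have := case_2_0 k.
have := case_2_1 k.
have := case_2_2 k.
have := case_2_3 k.
have := case_2_4 k.
have := case_2_5 k.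
have := case_3_1 k.
have := case_3_5 k.
have := case_4_0 k.
have := case_4_1 k.
have := case_4_2 k.
have := case_4_3 k.
have := case_4_4 k.
have := case_4_5 k.
have := case_5_1 k.
have := case_5_3 k.
have := case_5_5 k.
have := case_0_0 _ kp.
have := case_0_1 _ kp.
have := case_0_3 _ kp.
have := case_0_5 _ kp.
have := case_1_0 _ kp.
have := case_1_2 _ kp.
have := case_1_4 _ kp.
have := case_3_0 _ kp.
have := case_3_2 _ kp.
have := case_3_3 _ kp.
have := case_3_4 _ kp.
have := case_5_0 _ kp.
have := case_5_2 _ kp.
have := case_5_4 _ kp.
set S00 := (\sum_(0 <= j < 54 * k + 1) \sum_(0 <= i < 54 * k + 1) cnd k (6 * i + 0) (6 * j + 0))%N.
set S01 := (\sum_(0 <= j < 54 * k + 1) \sum_(0 <= i < 54 * k + 1) cnd k (6 * i + 0) (6 * j + 1))%N.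
set S02 := (\sum_(0 <= j < 54 * k + 1) \sum_(0 <= i < 54 * k + 1) cnd k (6 * i + 0) (6 * j + 2))%N.
set S03 := (\sum_(0 <= j < 54 * k + 1) \sum_(0 <= i < 54 * k + 1) cnd k (6 * i + 0) (6 * j + 3))%N.
set S04 := (\sum_(0 <= j < 54 * k + 1) \sum_(0 <= i < 54 * k + 1) cnd k (6 * i + 0) (6 * j + 4))%N.
set S05 := (\sum_(0 <= j < 54 * k + 1) \sum_(0 <= i < 54 * k + 1) cnd k (6 * i + 0) (6 * j + 5))%N.
set S10 := (\sum_(0 <= j < 54 * k + 1) \sum_(0 <= i < 54 * k + 1) cnd k (6 * i + 1) (6 * j + 0))%N.
set S11 := (\sum_(0 <= j < 54 * k + 1) \sum_(0 <= i < 54 * k + 1) cnd k (6 * i + 1) (6 * j + 1))%N.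
set S12 := (\sum_(0 <= j < 54 * k + 1) \sum_(0 <= i < 54 * k + 1) cnd k (6 * i + 1) (6 * j + 2))%N.
set S13 := (\sum_(0 <= j < 54 * k + 1) \sum_(0 <= i < 54 * k + 1) cnd k (6 * i + 1) (6 * j + 3))%N.
set S14 := (\sum_(0 <= j < 54 * k + 1) \sum_(0 <= i < 54 * k + 1) cnd k (6 * i + 1) (6 * j + 4))%N.
set S15 := (\sum_(0 <= j < 54 * k + 1) \sum_(0 <= i < 54 * k + 1) cnd k (6 * i + 1) (6 * j + 5))%N.
set S20 := (\sum_(0 <= j < 54 * k + 1) \sum_(0 <= i < 54 * k + 1) cnd k (6 * i + 2) (6 * j + 0))%N.
set S21 := (\sum_(0 <= j < 54 * k + 1) \sum_(0 <= i < 54 * k + 1) cnd k (6 * i + 2) (6 * j + 1))%N.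
set S22 := (\sum_(0 <= j < 54 * k + 1) \sum_(0 <= i < 54 * k + 1) cnd k (6 * i + 2) (6 * j + 2))%N.
set S23 := (\sum_(0 <= j < 54 * k + 1) \sum_(0 <= i < 54 * k + 1) cnd k (6 * i + 2) (6 * j + 3))%N.
set S24 := (\sum_(0 <= j < 54 * k + 1) \sum_(0 <= i < 54 * k + 1) cnd k (6 * i + 2) (6 * j + 4))%N.
set S25 := (\sum_(0 <= j < 54 * k + 1) \sum_(0 <= i < 54 * k + 1) cnd k (6 * i + 2) (6 * j + 5))%N.
set S30 := (\sum_(0 <= j < 54 * k + 1) \sum_(0 <= i < 54 * k + 1) cnd k (6 * i + 3) (6 * j + 0))%N.
set S31 := (\sum_(0 <= j < 54 * k + 1) \sum_(0 <= i < 54 * k + 1) cnd k (6 * i + 3) (6 * j + 1))%N.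
set S32 := (\sum_(0 <= j < 54 * k + 1) \sum_(0 <= i < 54 * k + 1) cnd k (6 * i + 3) (6 * j + 2))%N.
set S33 := (\sum_(0 <= j < 54 * k + 1) \sum_(0 <= i < 54 * k + 1) cnd k (6 * i + 3) (6 * j + 3))%N.
set S34 := (\sum_(0 <= j < 54 * k + 1) \sum_(0 <= i < 54 * k + 1) cnd k (6 * i + 3) (6 * j + 4))%N.
set S35 := (\sum_(0 <= j < 54 * k + 1) \sum_(0 <= i < 54 * k + 1) cnd k (6 * i + 3) (6 * j + 5))%N.
set S40 := (\sum_(0 <= j < 54 * k + 1) \sum_(0 <= i < 54 * k + 1) cnd k (6 * i + 4) (6 * j + 0))%N.
set S41 := (\sum_(0 <= j < 54 * k + 1) \sum_(0 <= i < 54 * k + 1) cnd k (6 * i + 4) (6 * j + 1))%N.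
set S42 := (\sum_(0 <= j < 54 * k + 1) \sum_(0 <= i < 54 * k + 1) cnd k (6 * i + 4) (6 * j + 2))%N.
set S43 := (\sum_(0 <= j < 54 * k + 1) \sum_(0 <= i < 54 * k + 1) cnd k (6 * i + 4) (6 * j + 3))%N.
set S44 := (\sum_(0 <= j < 54 * k + 1) \sum_(0 <= i < 54 * k + 1) cnd k (6 * i + 4) (6 * j + 4))%N.
set S45 := (\sum_(0 <= j < 54 * k + 1) \sum_(0 <= i < 54 * k + 1) cnd k (6 * i + 4) (6 * j + 5))%N.
set S50 := (\sum_(0 <= j < 54 * k + 1) \sum_(0 <= i < 54 * k + 1) cnd k (6 * i + 5) (6 * j + 0))%N.
set S51 := (\sum_(0 <= j < 54 * k + 1) \sum_(0 <= i < 54 * k + 1) cnd k (6 * i + 5) (6 * j + 1))%N.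
set S52 := (\sum_(0 <= j < 54 * k + 1) \sum_(0 <= i < 54 * k + 1) cnd k (6 * i + 5) (6 * j + 2))%N.
set S53 := (\sum_(0 <= j < 54 * k + 1) \sum_(0 <= i < 54 * k + 1) cnd k (6 * i + 5) (6 * j + 3))%N.
set S54 := (\sum_(0 <= j < 54 * k + 1) \sum_(0 <= i < 54 * k + 1) cnd k (6 * i + 5) (6 * j + 4))%N.
set S55 := (\sum_(0 <= j < 54 * k + 1) \sum_(0 <= i < 54 * k + 1) cnd k (6 * i + 5) (6 * j + 5))%N.
clearbody S00 S01 S02 S03 S04 S05 S10 S11 S12 S13 S14 S15 S20 S21 S22 S23 S24 S25 S30 S31 S32 S33 S34 S35 S40 S41 S42 S43 S44 S45 S50 S51 S52 S53 S54 S55.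
move=> h0 h1 h2 h3 h4 h5 h6 h7 h8 h9 h10 h11 h12 h13 h14 h15 h16 h17 h18 h19 h20 h21 h22 h23 h24 h25 h26 h27 h28 h29 h30 h31 h32 h33 h34 h35.
rewrite h14 h15 h16 h17 h18 h19 h20 h21 h22 h23 h24 h25 h26 h27 h28 h29 h30 h31 h32 h33 h34 h35 !addn0 !add0n PoszM !PoszD !mulrDr.
rewrite PoszM in h0. rewrite PoszM in h1. rewrite PoszM in h2. rewrite PoszM in h3. rewrite PoszM in h4. rewrite PoszM in h5. rewrite PoszM in h6. rewrite PoszM in h7. rewrite PoszM in h8. rewrite PoszM in h9. rewrite PoszM in h10. rewrite PoszM in h11. rewrite PoszM in h12. rewrite PoszM in h13.
rewrite h0 h1 h2 h3 h4 h5 h6 h7 h8 h9 h10 h11 h12 h13.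
ring.
Qed.

Lemma SP_Vn (R : realFieldType) k : (0 < k)%N -> S_P (Vn R k) = Cnt k.
Proof.
move=> kp; rewrite Vn_eq // (@SP_count R (Wn k) (6 * (54 * k + 1))%N); last first.
  by move=> y; rewrite memWn // => /memW_lt.
rewrite /Cnt; apply: eq_big_nat => x _; apply: eq_big_nat => d _.
by rewrite /cnd !memWn.
Qed.

Lemma Cnt_nat k : (0 < k)%N -> Cnt k = (1728 * (k * k) - 48 * k)%N.
Proof.
move=> kp.
have E2 : (2 * Cnt k = 2 * (1728 * (k * k) - 48 * k))%N.
  apply/eqP; rewrite -eqz_nat Cnt_eq // PoszM -subzn; last by nia.
  rewrite !PoszM; apply/eqP; ring.
by move/eqP: E2; rewrite eqn_mul2l /= => /eqP.
Qed.

Lemma SP_val (R : realFieldType) k : (0 < k)%N ->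
  (S_P (Vn R k))%:R = (3 * ((96 * k)%:R) ^+ 2 - 8 * (96 * k)%:R) / 16 :> R.
Proof.
move=> kp; rewrite SP_Vn // Cnt_nat // natrB; last by nia.
rewrite !natrM; field.
by [].
Qed.

Theorem mainTheorem13 (R : archiRealFieldType) :
  (forall k : nat, (0 < k)%N ->
     uniq (Vn R k) /\ size (Vn R k) = (96 * k)%N /\
     (S_P (Vn R k))%:R = (3 * ((96 * k)%:R) ^+ 2 - 8 * (96 * k)%:R) / 16 :> R) /\
  (forall eps : R, 0 < eps -> exists K : nat, forall k : nat, (K <= k)%N ->
     `| (S_P (Vn R k))%:R / ((96 * k)%:R) ^+ 2 - 3 / 16 | < eps).
Proof.
split.
  move=> k kp; split; last split.
  - rewrite Vn_eq // map_inj_uniq ?uniq_Wn // => x y /eqP.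
    by rewrite eqr_nat => /eqP.
  - by rewrite Vn_eq // size_map size_Wn.
  - exact: SP_val.
move=> eps ep.
have hb0 : 0 < eps^-1 by rewrite invr_gt0.
have hb := archi_boundP (ltW hb0).
exists (Num.Def.archi_bound eps^-1).+1 => k hk.
have kp : (0 < k)%N by apply: leq_ltn_trans hk.
rewrite SP_val //.
set n : R := (96 * k)%:R.
have n0 : n != 0 by rewrite /n pnatr_eq0 muln_eq0 negb_or /= -lt0n kp.
have np : 0 < n by rewrite /n ltr0n muln_gt0 kp.
have -> : (3 * n ^+ 2 - 8 * n) / 16 / n ^+ 2 - 3 / 16 = - (2 * n)^-1.
  by field; rewrite pnatr_eq0 -lt0n.
rewrite normrN ger0_norm; last by rewrite invr_ge0 mulr_ge0 // ltW.
rewrite -[eps]invrK ltf_pV2 ?posrE ?invr_gt0 ?mulr_gt0 //.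
apply: (lt_le_trans hb).
apply: (@le_trans _ _ k%:R).
  by rewrite ler_nat ltnW.
rewrite /n natrM.
have := ler0n R k.
lra.
Qed.
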